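(* Let $1\le l\le r$ and write $I^{[l]}(z)=\sum_{d}I^{[l]}_{d_1,\dots,d_n}z_1^{d_1}\cdots z_n^{d_n}$ with $I^{[l]}_{d_1,\dots,d_n}\in\mathbb{F}_p^n$, the sum over $(d_1,\dots,d_n)\in\mathbb{Z}_{\ge0}^n$. Put $\delta_l=\sum_{j=1}^nM_j-lp$. Then $I^{[l]}_{d_1,\dots,d_n}\ne0$ if and only if $\sum_id_i=\delta_l$ and $d_i\le M_i$ for all $i$; moreover $$I^{[l]}_{d_1,\dots,d_n}=(-1)^{\delta_l}\prod_{j=1}^n\binom{M_j}{d_j}\Big(1-\frac{d_1}{M_1},\dots,1-\frac{d_n}{M_n}\Big),$$ and, writing $I^{[l]}_{d_1,\dots,d_n}=(I_{d;1},\dots,I_{d;n})$, we have $\sum_im_iI_{d;i}=\sum_iM_iI_{d;i}=0$ in $\mathbb{F}_p$.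
   Context: $p,q$ are primes, $n$ a positive integer with $p>n\ge2$, $p>q$; $m_1,\dots,m_n$ are positive integers $<q$, and $M_i$ is the least positive integer with $M_i\equiv -m_iq^{-1}\pmod p$ (in formulas over $\mathbb{F}_p$ its residue). With $\Phi_p(x,z)=\prod_i(x-z_i)^{M_i}$, $I^{[l]}(z)\in\mathbb{F}_p[z_1,\dots,z_n]^n$ is the coefficient of $x^{lp-1}$ in $(\Phi_p/(x-z_1),\dots,\Phi_p/(x-z_n))$, and $r=\lfloor\sum_iM_i/p\rfloor$. *)

(* Defs.v *)
From HB Require Import structures.
From mathcomp Require Import all_boot all_order all_algebra.
From mathcomp Require Import mpoly.
Set Implicit Arguments. Unset Strict Implicit. Unset Printing Implicit Defensive.
Import GRing.Theory.
Local Open Scope ring_scope.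

Definition Phi (p n : nat) (M : 'I_n -> nat) : {poly {mpoly 'F_p[n]}} :=
  \prod_(i < n) ('X - ('X_i)%:P) ^+ M i.

(* j-th component of I^{[l]}(z): coefficient of x^{lp-1} in Phi_p/(x - z_j). *)
Definition Icomp (p n : nat) (M : 'I_n -> nat) (l : nat) (j : 'I_n)
  : {mpoly 'F_p[n]} :=
  ((Phi p M) %/ ('X - ('X_j)%:P))`_(l * p - 1).

Definition Icoef (p n : nat) (M : 'I_n -> nat) (l : nat) (d : 'X_{1..n})
  : 'rV['F_p]_n :=
  \row_(j < n) (Icomp p M l j)@_d.

(* Main.v *)
Require Import Defs.
From HB Require Import structures.
From mathcomp Require Import all_boot all_order all_algebra.
From mathcomp Require Import mpoly.
From mathcomp Require Import ring zify.
Import GRing.Theory.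
Local Open Scope ring_scope.

Section Exp.
Variable (R : comNzRingType) (n : nat).

Lemma expand1 (c : {mpoly R[n]}) (e B : nat) : (e < B)%N ->
  ('X - c%:P) ^+ e = \sum_(a < B) ((((-1)^+a *+ 'C(e,a)) : R) *: c ^+ a) *: 'X^(e - a).
Proof.
move=> eB; rewrite exprBn (big_ord_widen B (fun a => (-1) ^+ a * 'X ^+ (e - a) * c%:P ^+ a *+ 'C(e, a))) //.
rewrite big_mkcond /=; apply: eq_bigr => a _.
case: ifP => ha.
  rewrite -mul_polyC -rmorphXn /= mulrC mulrA -!mulrnAl; congr (_ * _).
  rewrite -scalerMnl rmorphMn /= mulrnAl; congr (_ *+ _).
  rewrite -mulr_algl rmorphM /= mulrC.
  have -> : ((-1) ^+ a : R)%:A = (-1) ^+ a :> {mpoly R[n]}.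
    by elim: (nat_of_ord a) => [|k IH]; rewrite ?scale1r // exprS -scalerA IH scaleN1r exprS mulN1r.
  by rewrite rmorph_sign.
by rewrite bin_small ?scaler0n ?mulr0n ?scale0r // ltnNge -ltnS ha.
Qed.

Lemma Pcoef (e : 'I_n -> nat) (k : nat) (d : 'X_{1..n}) :
  ((\prod_(i < n) ('X - ('X_i)%:P) ^+ e i : {poly {mpoly R[n]}})`_k)@_d =
  ((k == \sum_(i < n) (e i - d i))%N)%:R * \prod_(i < n) ((-1) ^+ d i *+ 'C(e i, d i)).
Proof.
pose B := (\sum_(i < n) e i + \sum_(i < n) d i).+1.
have eB i : (e i < B)%N.
  by rewrite ltnS (leq_trans _ (leq_addr _ _)) // (bigD1 i) //= leq_addr.
have dB i : (d i < B)%N.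
  by rewrite ltnS (leq_trans _ (leq_addl _ _)) // (bigD1 i) //= leq_addr.
rewrite (eq_bigr _ (fun i _ => @expand1 'X_i (e i) B (eB i))) bigA_distr_bigA /=.
under eq_bigr => f _ do rewrite scaler_prod prodrXr scaler_prod.
rewrite coef_sumMXn raddf_sum /=.
pose f0 : {ffun 'I_n -> 'I_B} := [ffun i => Ordinal (dB i)].
have Xf (f : {ffun 'I_n -> 'I_B}) : \prod_(i < n) ('X_i : {mpoly R[n]}) ^+ f i = 'X_[[multinom (f i : nat) | i < n]].
  by rewrite mpolyXE_id; apply: eq_bigr => i _; rewrite mnmE.
have Xf0 : \prod_(i < n) ('X_i : {mpoly R[n]}) ^+ f0 i = 'X_[d].
  by rewrite Xf; congr ('X_[_]); apply/mnmP => i; rewrite mnmE ffunE.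
have Xf1 (f : {ffun 'I_n -> 'I_B}) : f != f0 -> (\prod_(i < n) ('X_i : {mpoly R[n]}) ^+ f i)@_d = 0.
  move=> nf; rewrite Xf mcoeffX; case: eqP => // /mnmP H; case/eqP: nf.
  by apply/ffunP => i; apply/val_inj; rewrite ffunE /= -H mnmE.
have Z (f : {ffun 'I_n -> 'I_B}) : f != f0 -> (\prod_(i0 < n) ((-1) ^+ f i0 *+ 'C(e i0, f i0)) *:
      \prod_(i0 < n) ('X_i0 : {mpoly R[n]}) ^+ f i0)@_d = 0.
  by move=> nf; rewrite mcoeffZ Xf1 ?mulr0.
case: eqP => [->|nk].
  rewrite (bigD1 f0) /=; last by apply/eqP; apply: eq_bigr => i _; rewrite ffunE.
  rewrite [X in _ + X]big1 ?addr0; last by move=> f Hf; apply: Z; case/andP: Hf.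
  rewrite mcoeffZ Xf0 mcoeffX eqxx mulr1 mul1r.
  by apply: eq_bigr => i _; rewrite ffunE.
rewrite mul0r [LHS]big1 // => f /eqP hk; apply: Z; apply/eqP => hf; apply: nk.
by rewrite -hk hf; apply: eq_bigr => i _; rewrite ffunE.
Qed.
End Exp.

Lemma natFp_inj p (pr : prime p) a b : (a < p)%N -> (b < p)%N -> (a%:R : 'F_p) = b%:R -> a = b.
Proof.
move=> ap bp h; have := congr1 (@nat_of_ord _) h.
by rewrite !val_Fp_nat // !modn_small.
Qed.

Lemma natFp_neq0 p (pr : prime p) a : (0 < a < p)%N -> (a%:R : 'F_p) != 0.
Proof.
case/andP=> a0 ap; rewrite -(dvdn_pcharf (pchar_Fp pr)); apply/negP => /(dvdn_leq a0).
by rewrite leqNgt ap.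
Qed.

Lemma pfact p (pr : prime p) m : (p %| m`!)%N -> (p <= m)%N.
Proof.
elim: m => [|m IH]; first by rewrite dvdn1 => /eqP p1; rewrite p1 in pr.
rewrite factS Euclid_dvdM // => /orP [h|/IH h]; first exact: dvdn_leq h.
exact: leqW.
Qed.

Lemma binFp_neq0 p (pr : prime p) M d : (M < p)%N -> (d <= M)%N -> ('C(M, d)%:R : 'F_p) != 0.
Proof.
move=> Mp dM; rewrite -(dvdn_pcharf (pchar_Fp pr)); apply/negP => h.
have : (p %| M`!)%N by rewrite -(bin_fact dM) dvdn_mulr.
by move/(@pfact p pr); rewrite leqNgt Mp.
Qed.

Lemma divPhi (R : idomainType) n (M : 'I_n -> nat) j : (0 < M j)%N ->
  (\prod_(i < n) ('X - ('X_i)%:P) ^+ M i : {poly {mpoly R[n]}}) %/ ('X - ('X_j)%:P) =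
  \prod_(i < n) ('X - ('X_i)%:P) ^+ (if i == j then (M j).-1 else M i).
Proof.
move=> hM.
rewrite (bigD1 j) //= [RHS](bigD1 j) //= eqxx.
have -> : \prod_(i < n | i != j) ('X - ('X_i)%:P) ^+ (if i == j then (M j).-1 else M i) =
   \prod_(i < n | i != j) ('X - ('X_i : {mpoly R[n]})%:P) ^+ M i.
  by apply: eq_bigr => i /negbTE ->.
set Q := \prod_(i < n | i != j) _.
set c := ('X - _).
have -> : c ^+ M j = c ^+ (M j).-1 * c by rewrite -exprSr prednK.
by rewrite -mulrA [c * Q]mulrC mulrA Pdiv.IdomainMonic.mulpK // monicXsubC.
Qed.

Lemma Icomp_eq p n (M : 'I_n -> nat) l j : (0 < M j)%N ->
  Icomp p M l j = (\prod_(i < n) ('X - ('X_i)%:P) ^+ (if i == j then (M j).-1 else M i))`_(l * p - 1).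
Proof.
by move=> hM; rewrite /Icomp /Phi divPhi.
Qed.

Lemma Ient p n (M : 'I_n -> nat) l j d : (0 < M j)%N ->
  Icoef p M l d ord0 j = ((l * p - 1 == \sum_(i < n) ((if i == j then (M j).-1 else M i) - d i))%N)%:R
     * \prod_(i < n) ((-1) ^+ d i *+ 'C(if i == j then (M j).-1 else M i, d i)).
Proof.
by move=> hM; rewrite /Icoef mxE Icomp_eq // Pcoef.
Qed.

Lemma Ival p n (M : 'I_n -> nat) l d j (pr : prime p)
  (hMp : forall i, (0 < M i < p)%N) (hlp : (0 < l * p <= \sum_(i < n) M i)%N) :
  Icoef p M l d ord0 j =
  if ((\sum_(i < n) d i)%N == (\sum_(i < n) M i - l * p)%N) && [forall i, (d i <= M i)%N] then
    ((-1) ^+ (\sum_(i < n) M i - l * p) * \prod_(i < n) ('C(M i, d i))%:R) * (1 - (d j)%:R / (M j)%:R)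
  else 0.
Proof.
have hM0 i : (0 < M i)%N by case/andP: (hMp i).
rewrite Ient //.
have se : (\sum_(i < n) (if i == j then (M j).-1 else M i) = \sum_(i < n) M i - 1)%N.
  rewrite (bigD1 j) //= [X in (_ = X - 1)%N](bigD1 j) //= eqxx.
  have -> : (\sum_(i < n | i != j) (if i == j then (M j).-1 else M i) = \sum_(i < n | i != j) M i)%N.
    by apply: eq_bigr => i /negbTE ->.
  by rewrite -{2}(prednK (hM0 j)) addSn subn1.
have eM i : ((if i == j then (M j).-1 else M i) <= M i)%N by case: eqP => [->|]; [exact: leq_pred|].
case: ifP => [/andP [/eqP hs /forallP hd] | hc].
  have hMnz : ((M j)%:R : 'F_p) != 0 by apply: natFp_neq0.
  case: (ltngtP (d j) (M j)) => [dlt | dgt | deq].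
  - have de i : (d i <= (if i == j then (M j).-1 else M i))%N.
      by case: eqP => [->|_]; [rewrite -ltnS prednK|apply: hd].
    have -> : (\sum_(i < n) ((if i == j then (M j).-1 else M i) - d i) = l * p - 1)%N.
      by rewrite sumnB // se hs; lia.
    rewrite (_ : ((l * p - 1)%N == (l * p - 1)%N) = true); last exact: eqxx.
    rewrite mul1r.
    rewrite (eq_bigr (fun i => (-1) ^+ d i * ('C(if i == j then (M j).-1 else M i, d i))%:R)); last first.
      by move=> i _; rewrite mulr_natr.
    rewrite big_split /= prodrXr hs.
    rewrite [X in _ * X = _](bigD1 j) // [X in _ = _ * X * _](bigD1 j) // eqxx.
    have -> : \prod_(i < n | i != j) ('C(if i == j then (M j).-1 else M i, d i))%:R =
        \prod_(i < n | i != j) ('C(M i, d i))%:R :> 'F_p.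
      by apply: eq_bigr => i /negbTE ->.
    have hb : ('C((M j).-1, d j))%:R = ('C(M j, d j))%:R * (1 - (d j)%:R / (M j)%:R) :> 'F_p.
      apply: (mulfI hMnz); rewrite -natrM mul_bin_down natrM natrB; last exact: ltnW.
      by rewrite mulrCA mulrBr mulr1 mulrCA divff // mulr1 mulrC.
    by rewrite hb /=; ring.
  - by have := hd j; rewrite leqNgt dgt.
  - rewrite [X in _ * X = _](bigD1 j) // eqxx deq bin_small; last by rewrite prednK.
    by rewrite mulr0n /= mul0r mulr0 divff // subrr mulr0.
case: eqP => [hq|_]; last by rewrite mul0r.
case: (boolP [exists i, ((if i == j then (M j).-1 else M i) < d i)%N]) => [/existsP [i hi] | /existsPn hn].
  by rewrite [X in _ * X = _](bigD1 i) // bin_small // mulr0n /= mul0r mulr0.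
have de i : (d i <= (if i == j then (M j).-1 else M i))%N by rewrite leqNgt hn.
have hle : (\sum_(i < n) d i <= \sum_(i < n) (if i == j then (M j).-1 else M i))%N.
  by apply: leq_sum => i _; apply: de.
rewrite sumnB // se in hq; rewrite se in hle.
suff : ((\sum_(i < n) d i)%N == (\sum_(i < n) M i - l * p)%N) && [forall i, (d i <= M i)%N] by rewrite hc.
apply/andP; split; first apply/eqP.
have E : (\sum_i d i = \sum_(i < n) d i)%N by [].
rewrite E in hq; lia.
by apply/forallP => i; exact: leq_trans (de i) (eM i).
Qed.

Theorem lemma3p1 (p q n : nat) (m M : 'I_n -> nat) (l : nat) :
  prime p -> prime q -> (2 <= n)%N -> (n < p)%N -> (q < p)%N ->
  (forall i, 0 < m i < q)%N ->
  (* M_i is the least positive integer with M_i = -m_i q^{-1} (mod p) *)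
  (forall i, (0 < M i)%N /\
     ((M i)%:R = - (m i)%:R / q%:R :> 'F_p) /\
     (forall k : nat, (0 < k)%N -> (k%:R = - (m i)%:R / q%:R :> 'F_p) ->
        (M i <= k)%N)) ->
  let r := ((\sum_(i < n) M i) %/ p)%N in
  let delta := ((\sum_(i < n) M i) - l * p)%N in
  (1 <= l <= r)%N ->
  forall d : 'X_{1..n},
    (Icoef p M l d != 0 <->
       ((\sum_(i < n) d i)%N = delta /\ forall i, (d i <= M i)%N)) /\
    (((\sum_(i < n) d i)%N = delta /\ forall i, (d i <= M i)%N) ->
       Icoef p M l d =
         ((-1) ^+ delta * \prod_(j < n) ('C(M j, d j))%:R) *:
           \row_(i < n) (1 - (d i)%:R / (M i)%:R : 'F_p)) /\
    (\sum_(i < n) (m i)%:R * Icoef p M l d ord0 i = 0 :> 'F_p) /\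
    (\sum_(i < n) (M i)%:R * Icoef p M l d ord0 i = 0 :> 'F_p).
Proof.
move=> pr prq n2 np qp hm hM r delta hl d.
have p0 : (0 < p)%N by apply: prime_gt0.
have q0 : (0 < q)%N by apply: prime_gt0.
have qnz : (q%:R : 'F_p) != 0 by apply: (@natFp_neq0 p pr); rewrite q0 qp.
have mnz i : ((m i)%:R : 'F_p) != 0.
  by apply: (@natFp_neq0 p pr); case/andP: (hm i) => -> /= h; exact: ltn_trans h qp.
have hMnz i : ((M i)%:R : 'F_p) != 0.
  by case: (hM i) => _ [-> _]; rewrite mulf_neq0 ?oppr_eq0 ?invr_eq0.
have hMp i : (0 < M i < p)%N.
  case: (hM i) => M0 [hMe hmin]; rewrite M0 /=.
  have k0 : (0 < M i %% p)%N.
    rewrite lt0n; apply/negP => /eqP h; move: (hMnz i).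
    by rewrite -(Fp_nat_mod pr) h eqxx.
  apply: (leq_ltn_trans (hmin _ k0 _)); first by rewrite Fp_nat_mod.
  by rewrite ltn_pmod.
have hlp : (0 < l * p <= \sum_(i < n) M i)%N.
  case/andP: hl => l1 lr; rewrite muln_gt0 l1 p0 /=.
  by rewrite -leq_divRL.
pose cnd := ((\sum_(i < n) d i)%N == (\sum_(i < n) M i - l * p)%N) && [forall i, (d i <= M i)%N].
have cndE : cnd <-> ((\sum_(i < n) d i)%N = delta /\ forall i, (d i <= M i)%N).
  split; first by case/andP => /eqP -> /forallP.
  by case=> hs hd; apply/andP; split; [apply/eqP; rewrite hs | apply/forallP].
pose c := ((-1) ^+ delta * \prod_(j < n) ('C(M j, d j))%:R : 'F_p).
have Iv j : Icoef p M l d ord0 j = if cnd then c * (1 - (d j)%:R / (M j)%:R) else 0.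
  exact: (@Ival p n M l d j pr hMp hlp).
have Iv1 (i0 : 'I_1) j : Icoef p M l d i0 j = if cnd then c * (1 - (d j)%:R / (M j)%:R) else 0.
  by rewrite (ord1 i0); exact: Iv.
have H2 : cnd -> Icoef p M l d = c *: \row_(i < n) (1 - (d i)%:R / (M i)%:R : 'F_p).
  by move=> hc; apply/rowP => j; rewrite Iv1 !mxE hc.
have H0 : ~~ cnd -> Icoef p M l d = 0.
  by move=> hc; apply/rowP => j; rewrite Iv1 !mxE (negbTE hc).
have SM : \sum_(i < n) (M i)%:R * Icoef p M l d ord0 i = 0 :> 'F_p.
  case: (boolP cnd) => hc; last first.
    by rewrite big1 // => i _; rewrite (Iv i) (negbTE hc) mulr0.
  have -> : \sum_(i < n) (M i)%:R * Icoef p M l d ord0 i =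
       c * \sum_(i < n) ((M i)%:R - (d i)%:R) :> 'F_p.
    rewrite mulr_sumr; apply: eq_bigr => i _; rewrite (Iv i) hc.
    by rewrite mulrCA mulrBr mulr1 mulrCA divff // mulr1.
  rewrite sumrB -!natr_sum.
  case/andP: hc => /eqP -> _.
  case/andP: hlp => _ hle.
  by rewrite natrB // opprB addrC subrK natrM pchar_Fp_0 // mulr0 mulr0.
have SMm : \sum_(i < n) (m i)%:R * Icoef p M l d ord0 i = 0 :> 'F_p.
  have -> : \sum_(i < n) (m i)%:R * Icoef p M l d ord0 i =
     - (q%:R * \sum_(i < n) (M i)%:R * Icoef p M l d ord0 i) :> 'F_p.
    rewrite mulr_sumr -sumrN; apply: eq_bigr => i _.
    case: (hM i) => _ [hMe _]; rewrite hMe.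
    by field.
  by rewrite SM mulr0 oppr0.
split; last by split; [ move=> /cndE; exact: H2 | split ].
split.
  move=> H; apply/cndE; apply/negPn/negP => hc; move/negP: H; apply.
  by rewrite H0.
move=> hc0; have hc : cnd by apply/cndE.
have [i0 hi0] : exists i, (d i < M i)%N.
  case: (boolP [exists i, (d i < M i)%N]) => [/existsP //|/existsPn hn].
  have : (\sum_(i < n) M i <= \sum_(i < n) d i)%N.
    by apply: leq_sum => i _; rewrite leqNgt hn.
  case: hc0 => -> _; rewrite /delta; lia.
rewrite (H2 hc); apply/negP => /eqP H; have := congr1 (fun A : 'rV_n => A ord0 i0) H.
rewrite !mxE; apply/eqP; rewrite mulf_neq0 //.
  rewrite mulf_neq0 ?signr_eq0 //; apply/prodf_neq0 => i _.
  by apply: (@binFp_neq0 p pr); [case/andP: (hMp i) | case: hc0].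
rewrite subr_eq0; apply/negP => /eqP h.
move/(congr1 (fun x => x * (M i0)%:R)): h; rewrite mul1r divfK // => h.
have := @natFp_inj p pr _ _ (proj2 (andP (hMp i0))) (ltn_trans hi0 (proj2 (andP (hMp i0)))) h.
by move=> e; rewrite e ltnn in hi0.
Qed.
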